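(* Let $(X,d)$ be a compact metric space and let $f_1,f_2:X\to X$ be continuous. Suppose there exists $0<\lambda<1$ such that for all nonempty open sets $U,V\subset X$ there exist $x\in U$ and $y\in V$ with $d(f_i(x),f_i(y))<\lambda\, d(x,y)$ for $i=1,2$. Then the multiple mapping $F=\{f_1,f_2\}$ is (Hausdorff metric) accessible.
   Context: For the multiple mapping $F=\{f_1,f_2\}$ and $n\ge 1$, $F^n(x)=\{f_{i_1}f_{i_2}\cdots f_{i_n}(x)\mid i_1,\dots,i_n\in\{1,2\}\}$. The Hausdorff metric on nonempty compact subsets is $d_H(A,B)=\max\{\sup_{a\in A}\inf_{b\in B}d(a,b),\sup_{b\in B}\inf_{a\in A}d(a,b)\}$. $F$ is (Hausdorff metric) accessible if for every $\epsilon>0$ and all nonempty open $U,V\subset X$ there exist $x\in U$, $y\in V$ and $n\in\mathbb{Z}^+=\{1,2,\dots\}$ with $d_H(F^n(x),F^n(y))<\epsilon$. *)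

(* Defs.v *)
From HB Require Import structures.
From mathcomp Require Import all_boot all_order all_algebra.
From mathcomp Require Import all_classical all_reals all_analysis.
Set Implicit Arguments. Unset Strict Implicit. Unset Printing Implicit Defensive.
Import Order.TTheory GRing.Theory Num.Theory.
Local Open Scope classical_set_scope.
Local Open Scope ring_scope.

(* The composition f_{i_1} f_{i_2} ... f_{i_n} (x) for the word w = [i_1;...;i_n];
   index true stands for f_1 and false for f_2. *)
Definition word_apply {X : Type} (f1 f2 : X -> X) (w : seq bool) (x : X) : X :=
  foldr (fun (i : bool) y => (if i then f1 else f2) y) x w.

Definition Fn {X : Type} (f1 f2 : X -> X) (n : nat) (x : X) : set X :=
  [set word_apply f1 f2 (tval w) x | w in [set: n.-tuple bool]].

Definition hausdorff_dist {R : realType} {X : metricType R} (A B : set X) : R :=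
  Num.max (sup [set inf [set mdist a b | b in B] | a in A])
          (sup [set inf [set mdist a b | a in A] | b in B]).

Definition accessible {R : realType} {X : metricType R} (f1 f2 : X -> X) : Prop :=
  forall (eps : R), 0 < eps ->
  forall U V : set X, open U -> open V -> U !=set0 -> V !=set0 ->
  exists x y (n : nat), [/\ U x, V y, (0 < n)%N &
                          hausdorff_dist (Fn f1 f2 n x) (Fn f1 f2 n y) < eps].

(* Main.v *)
Require Import Defs.
From HB Require Import structures.
From mathcomp Require Import all_boot all_order all_algebra.
From mathcomp Require Import all_classical all_reals all_analysis.
From mathcomp Require Import lra.
Import Order.TTheory GRing.Theory Num.Theory.
Local Open Scope classical_set_scope.
Local Open Scope ring_scope.

Lemma lip (R : realType) (X : metricType R) (f : X -> X) (lam : R) :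
  continuous f -> 0 <= lam <= 1 ->
  (forall U V : set X, open U -> open V -> U !=set0 -> V !=set0 ->
     exists x y, [/\ U x, V y & mdist (f x) (f y) < lam * mdist x y]) ->
  forall p q, mdist (f p) (f q) <= lam * mdist p q.
Proof.
move=> cf /andP[lam0 lam1] H p q; apply/ler_addgt0Pr => e e0.
have e4 : 0 < e / 4 by rewrite divr_gt0.
have N : forall z : X, \forall y \near z, mdist (f z) (f y) < e / 4 /\ mdist z y < e / 4.
  move=> z; near=> y; split; near: y.
    exact: (metricType_numDomainType.cvgr_dist_lt (cf z)).
  exact: (metricType_numDomainType.cvgr_dist_lt (@cvg_id _ (nbhs z))).
have : nbhs p _ := N p; rewrite nbhsE => -[U [oU Up] sU].
have : nbhs q _ := N q; rewrite nbhsE => -[V [oV Vq] sV].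
have [x [y [Ux Vy lt]]] := H U V oU oV (ex_intro _ p Up) (ex_intro _ q Vq).
have [h1 h2] := sU x Ux; have [h3 h4] := sV y Vy.
have t1 : mdist (f p) (f q) <= mdist (f p) (f x) + mdist (f x) (f y) + mdist (f y) (f q).
  apply: (le_trans (metric_triangle _ (f y) _)); rewrite lerD2r.
  exact: metric_triangle.
have t2 : mdist x y <= mdist x p + mdist p q + mdist q y.
  apply: (le_trans (metric_triangle _ q _)); rewrite lerD2r.
  exact: metric_triangle.
rewrite (metric_sym (f y) (f q)) in t1; rewrite (metric_sym x p) in t2.
have t3 : lam * mdist x y <= lam * (mdist p x + mdist p q + mdist q y).
  exact: (ler_wpM2l lam0 t2).
have t4 : lam * (e / 4) <= e / 4 by rewrite ler_piMl // (ltW e4).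
have g1 := mdist_ge0 p x. have g2 := mdist_ge0 q y.
have t5 : lam * mdist p x <= e / 4 by rewrite (le_trans _ t4) //; apply: (ler_wpM2l lam0); rewrite ltW.
have t6 : lam * mdist q y <= e / 4 by rewrite (le_trans _ t4) //; apply: (ler_wpM2l lam0); rewrite ltW.
rewrite !mulrDr in t3.
lra.
Unshelve. all: by end_near.
Qed.

Lemma word_lip (R : realType) (X : metricType R) (f1 f2 : X -> X) (lam : R) :
  0 <= lam ->
  (forall p q, mdist (f1 p) (f1 q) <= lam * mdist p q) ->
  (forall p q, mdist (f2 p) (f2 q) <= lam * mdist p q) ->
  forall w p q, mdist (word_apply f1 f2 w p) (word_apply f1 f2 w q)
                <= lam ^+ (size w) * mdist p q.
Proof.
move=> l0 L1 L2; elim=> [|i w IH] p q /=; first by rewrite expr0 mul1r.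
rewrite exprS -mulrA.
apply: (le_trans _ (ler_wpM2l l0 (IH p q))).
by case: i; [apply: L1|apply: L2].
Qed.

Lemma haus_le (R : realType) (X : metricType R) (f1 f2 : X -> X) (lam : R) :
  0 <= lam ->
  (forall p q, mdist (f1 p) (f1 q) <= lam * mdist p q) ->
  (forall p q, mdist (f2 p) (f2 q) <= lam * mdist p q) ->
  forall n x y, hausdorff_dist (Fn f1 f2 n x) (Fn f1 f2 n y) <= lam ^+ n * mdist x y.
Proof.
move=> l0 L1 L2 n x y.
have WL := @word_lip _ _ f1 f2 lam l0 L1 L2.
have hl : forall z : X, forall B : set X, has_lbound [set mdist z b | b in B].
  by move=> z B; exists 0 => _ [b _ <-]; exact: mdist_ge0.
rewrite /hausdorff_dist ge_max; apply/andP; split; apply: ge_sup.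
- exists (inf [set mdist (word_apply f1 f2 (nseq n false) x) b | b in Fn f1 f2 n y]).
  exists (word_apply f1 f2 (nseq n false) x) => //.
  by exists (nseq_tuple n false).
- move=> _ [_ [w _ <-] <-].
  apply: (le_trans (ge_inf (hl _ _) _)).
    by exists (word_apply f1 f2 w y) => //; exists w.
  by have := WL w x y; rewrite size_tuple.
- exists (inf [set mdist a (word_apply f1 f2 (nseq n false) y) | a in Fn f1 f2 n x]).
  exists (word_apply f1 f2 (nseq n false) y) => //.
  by exists (nseq_tuple n false).
- move=> _ [_ [w _ <-] <-].
  have hl2 : has_lbound [set mdist a (word_apply f1 f2 w y) | a in Fn f1 f2 n x].
    by exists 0 => _ [b _ <-]; exact: mdist_ge0.
  apply: (le_trans (ge_inf hl2 _)).
    by exists (word_apply f1 f2 w x) => //; exists w.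
  by have := WL w x y; rewrite size_tuple.
Qed.

Theorem theorem3p9 (R : realType) (X : metricType R) (f1 f2 : X -> X) :
  compact [set: X] -> continuous f1 -> continuous f2 ->
  (exists lambda : R, 0 < lambda < 1 /\
     forall U V : set X, open U -> open V -> U !=set0 -> V !=set0 ->
     exists x y, [/\ U x, V y,
       mdist (f1 x) (f1 y) < lambda * mdist x y &
       mdist (f2 x) (f2 y) < lambda * mdist x y]) ->
  accessible f1 f2.
Proof.
move=> _ c1 c2 [lam [/andP[l0 l1] H]] eps eps0 U V oU oV [x Ux] [y Vy].
have l01 : 0 <= lam <= 1 by rewrite !ltW.
have L1 := @lip _ _ f1 lam c1 l01 (fun U V oU oV nU nV =>
  let: ex_intro a (ex_intro b (And4 h1 h2 h3 _)) := H U V oU oV nU nV in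
  ex_intro _ a (ex_intro _ b (And3 h1 h2 h3))).
have L2 := @lip _ _ f2 lam c2 l01 (fun U V oU oV nU nV =>
  let: ex_intro a (ex_intro b (And4 h1 h2 _ h4)) := H U V oU oV nU nV in
  ex_intro _ a (ex_intro _ b (And3 h1 h2 h4))).
set D := mdist x y.
have D0 : 0 <= D by exact: mdist_ge0.
have c0 : 0 < eps / (D + 1) by rewrite divr_gt0 // ltr_wpDl.
have lam_lt : `|lam| < 1 by rewrite ger0_norm // ltW.
have := @cvgr0_norm_lt _ R^o _ _ _ (fun n : nat => lam ^+ n) (cvg_expr lam_lt) _ c0.
case=> N _ HN.
have := HN N.+1 (leqnSn N); rewrite /= ger0_norm ?exprn_ge0 ?ltW // => hN.
exists x, y, N.+1; split => //.
apply: (le_lt_trans (@haus_le _ _ f1 f2 lam (ltW l0) L1 L2 _ _ _)).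
rewrite -/D.
have hp : 0 <= lam ^+ N.+1 by rewrite exprn_ge0 // ltW.
have e1 : eps = eps / (D + 1) * (D + 1) by rewrite divfK // gt_eqF // ltr_wpDl.
rewrite [X in _ < X]e1.
apply: (le_lt_trans (y := lam ^+ N.+1 * (D + 1))).
  by apply: ler_wpM2l => //; rewrite lerDl.
by rewrite ltr_pM2r // ltr_wpDl.
Qed.
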